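(* Let $m\ge 0$ and $Z\ge 1$ be integers and let $\gamma,\kappa\ge 2$ be integers with $\gamma\kappa>\gamma+\kappa$. Consider pairs $(\mathbf P,\mathbf L)$ with $\mathbf P\in\{0,\ldots,m\}^{\gamma\times\kappa}$ and $\mathbf L\in\mathbb{Z}_Z^{\gamma\times\kappa}$. For $1\le i_1<i_2\le\gamma$ and $1\le j_1<j_2\le\kappa$, call $(i_1,i_2,j_1,j_2)$ active under $(\mathbf P,\mathbf L)$ if $\mathbf P(i_1,j_1)+\mathbf P(i_2,j_2)=\mathbf P(i_1,j_2)+\mathbf P(i_2,j_1)$ and $\mathbf L(i_1,j_1)+\mathbf L(i_2,j_2)\equiv\mathbf L(i_1,j_2)+\mathbf L(i_2,j_1)\pmod Z$. Call two pairs $(\mathbf P,\mathbf L)$, $(\mathbf P',\mathbf L')$ equivalent if there exist a permutation $\pi_r$ of $[\gamma]$ and a permutation $\pi_c$ of $[\kappa]$ such that $\mathbf P'(\pi_r(i),\pi_c(j))=\mathbf P(i,j)$ and $\mathbf L'(\pi_r(i),\pi_c(j))=\mathbf L(i,j)$ for all $i,j$. Let $N_N$ be the number of equivalence classes of pairs under which no 4-cycle candidate is active. Let $\Delta=(2\gamma-3)(2\kappa-3)$, $I=\frac{(\Delta-1)^{\Delta-1}}{\Delta^{\Delta}}$, $II=\frac{27}{256(\gamma\kappa-\gamma-\kappa)}$. If $\frac{2m^2+4m+3}{3(m+1)^3Z}\le\max\{I,II\}$, then $$N_N\ \ge\ \begin{cases}\dfrac{[Z(m+1)]^{\gamma\kappa}\left(1-\frac{2}{\Delta}\right)^{\binom{\gamma}{2}\binom{\kappa}{2}}}{\gamma!\,\kappa!},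 & \text{if } I>II,\\[8pt] \dfrac{[Z(m+1)]^{\gamma\kappa}\left(1-\frac{\gamma\kappa-\gamma-\kappa+1}{4(\gamma\kappa-\gamma-\kappa)}\right)^{\gamma\kappa}}{\gamma!\,\kappa!}, & \text{otherwise.}\end{cases}$$
   Context: Setting: uniform edge spreading (partition matrix $\mathbf P$, memory $m$) and uniform $Z$-lifting (lifting matrix $\mathbf L$) of the all-ones $\gamma\times\kappa$ base matrix; the activation conditions are those for a base-graph 4-cycle to survive spreading and lifting. *)

(* Defs.v *)
From HB Require Import structures.
From mathcomp Require Import all_boot all_order all_algebra all_fingroup.
Set Implicit Arguments. Unset Strict Implicit. Unset Printing Implicit Defensive.
Import Order.TTheory GRing.Theory Num.Theory.

(* A pair (P, L): partition matrix with entries in {0..m} and lifting matrix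
   with entries in Z_Z = {0..Z-1} (arithmetic taken mod Z). Indices are
   0-based ordinals ('I_g for [gamma], 'I_k for [kappa]). *)
Definition pairT (g k m Z : nat) : finType :=
  ({ffun 'I_g * 'I_k -> 'I_m.+1} * {ffun 'I_g * 'I_k -> 'I_Z})%type.

Definition active g k m Z (PL : pairT g k m Z) (i1 i2 : 'I_g) (j1 j2 : 'I_k) : bool :=
  let P := PL.1 in let L := PL.2 in
  [&& (i1 < i2)%N, (j1 < j2)%N,
      (P (i1, j1) + P (i2, j2) == P (i1, j2) + P (i2, j1))%N &
      ((L (i1, j1) + L (i2, j2)) %% Z == (L (i1, j2) + L (i2, j1)) %% Z)%N].

Definition no_active g k m Z (PL : pairT g k m Z) : bool :=
  [forall i1 : 'I_g, forall i2 : 'I_g, forall j1 : 'I_k, forall j2 : 'I_k,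
     ~~ active PL i1 i2 j1 j2].

Definition equiv_pair g k m Z (PL PL' : pairT g k m Z) : bool :=
  [exists pr : 'S_g, exists pc : 'S_k,
     [forall i : 'I_g, forall j : 'I_k,
        (PL'.1 (pr i, pc j) == PL.1 (i, j)) && (PL'.2 (pr i, pc j) == PL.2 (i, j))]].

Definition eq_class g k m Z (PL : pairT g k m Z) : {set pairT g k m Z} :=
  [set PL' | equiv_pair PL PL'].

Definition N_N g k m Z : nat :=
  #|[set eq_class PL | PL in [set PL : pairT g k m Z | no_active PL]]|.

Local Open Scope ring_scope.

Definition Delta (g k : nat) : nat := ((2 * g - 3) * (2 * k - 3))%N.

Definition boundI (g k : nat) : rat :=
  ((Delta g k)%:R - 1) ^+ (Delta g k).-1 / (Delta g k)%:R ^+ (Delta g k).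

Definition boundII (g k : nat) : rat :=
  27%:R / (256%:R * (g * k - g - k)%N%:R).

(* Main.v *)
Require Import Defs.
From HB Require Import structures.
From mathcomp Require Import all_boot all_order all_algebra all_fingroup.
From mathcomp Require Import zify ring lra.
Set Implicit Arguments. Unset Strict Implicit. Unset Printing Implicit Defensive.
Import Order.TTheory GRing.Theory Num.Theory.

Section Greedy.
Variables (T V : finType) (r : T -> nat) (v0 : V) (forb : T -> {ffun T -> V} -> {set V}) (c : T -> nat).
Hypothesis rinj : injective r.
Hypothesis forb_dep : forall x (f f' : {ffun T -> V}), (forall y, r y < r x -> f y = f' y) -> forb x f = forb x f'.
Hypothesis forb_card : forall x (f : {ffun T -> V}), #|forb x f| <= c x.

Definition Aset t := [set f : {ffun T -> V} | [forall x, (t <= r x) ==> (f x == v0)] && [forall x, (r x < t) ==> (f x \notin forb x f)]].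

Lemma greedy t : \prod_(x | r x < t) (#|V| - c x) <= #|Aset t|.
Proof.
elim: t => [|t IH].
  rewrite big_pred0 => [|x]; last by [].
  rewrite card_gt0; apply/set0Pn; exists [ffun=> v0]; rewrite inE; apply/andP; split; apply/forallP=> x; by rewrite ?ffunE ?eqxx ?implybT.
case: (pickP (fun x => r x == t)) => [x0 /eqP rx0 | none].
- rewrite (bigD1 x0) /=; last by rewrite rx0.
  rewrite (eq_bigl (fun x => r x < t)); last first.
    move=> x; apply/andP/idP => [[]|].
      rewrite ltnS leq_eqVlt => /orP [/eqP rxt|] //.
      by rewrite -rx0 in rxt; move/rinj: rxt => ->; rewrite eqxx.
    move=> h; split; first by apply: ltnW.
    by apply/eqP => e; rewrite e rx0 ltnn in h.
  set B := [set p : {ffun T -> V} * V | (p.1 \in Aset t) && (p.2 \notin forb x0 p.1)].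
  have cardB : #|Aset t| * (#|V| - c x0) <= #|B|.
    have -> : #|B| = \sum_(f in Aset t) #|~: forb x0 f|.
      rewrite -sum1_card big_mkcond /=.
      rewrite (eq_bigr (fun p => (fun f v => if (f, v) \in B then 1 else 0) p.1 p.2)); last by move=> [].
      rewrite -(pair_bigA _ (fun f v => if (f, v) \in B then 1 else 0)) /=.
      rewrite [RHS]big_mkcond /=; apply: eq_bigr => f _.
      case fA: (f \in Aset t).
        rewrite -sum1_card [RHS]big_mkcond /=; apply: eq_bigr => v _.
        by rewrite [in LHS]inE /= fA !inE.
      by rewrite big1 // => v _; rewrite inE /= fA.
    rewrite -sum_nat_const; apply: leq_sum => f _.
    have := forb_card x0 f; rewrite cardsCs.
    have := subset_leq_card (subsetT (~: forb x0 f)); rewrite cardsT.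
    lia.
  set h := fun p : {ffun T -> V} * V => [ffun y => if y == x0 then p.2 else p.1 y].
  have hinj : {in B &, injective h}.
    move=> [f v] [f' v']; rewrite !inE /= => /andP [fA _] /andP [fA' _] e.
    have ev : v = v' by have := congr1 (fun F : {ffun T -> V} => F x0) e; rewrite /h /= !ffunE eqxx.
    congr (_, _) => //; apply/ffunP => y.
    case: (eqVneq y x0) => [->|ne].
      move: fA fA' => /andP [/forallP /(_ x0)] + _ /andP [/forallP /(_ x0)] + _.
      by rewrite rx0 leqnn /= => /eqP -> /eqP ->.
    by have := congr1 (fun F : {ffun T -> V} => F y) e; rewrite /h /= !ffunE (negPf ne).
  rewrite mulnC; apply: (leq_trans (leq_mul IH (leqnn _))); apply: (leq_trans cardB); rewrite -(card_in_imset hinj).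
  apply: subset_leq_card; apply/subsetP => _ /imsetP [[f v] pB ->].
  move: pB; rewrite !inE /= => /andP [/andP [/forallP f0 /forallP fg] vf].
  have fe : forall y, r y < t -> h (f, v) y = f y.
    move=> y ry; rewrite /h ffunE; case: (y =P x0) => // ey.
    by rewrite ey rx0 ltnn in ry.
  apply/andP; split; apply/forallP => y.
    apply/implyP => ty; rewrite /h ffunE; case: (y =P x0) => [ey|_].
      by move: ty; rewrite ey rx0 ltnn.
    by have := f0 y; rewrite (ltnW ty).
  apply/implyP; rewrite ltnS leq_eqVlt => /orP [/eqP ryt|ryt].
    have eyx : y = x0 by apply: rinj; rewrite ryt rx0.
    rewrite eyx; rewrite (forb_dep (f' := f)); last by move=> y'; rewrite rx0; apply: fe.
    by rewrite /h ffunE eqxx.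
  rewrite (forb_dep (f' := f)); last by move=> y' ry'; apply: fe; apply: ltn_trans ry' ryt.
  by rewrite fe //; have := fg y; rewrite ryt.
- rewrite (eq_bigl (fun x => r x < t)); last first.
    by move=> x; rewrite ltnS leq_eqVlt; have := none x; rewrite /= => ->.
  apply: (leq_trans IH); apply: subset_leq_card; apply/subsetP => f.
  rewrite !inE => /andP [/forallP f0 /forallP fg]; apply/andP; split; apply/forallP => y.
    by apply/implyP => ty; have := f0 y; rewrite (ltnW ty).
  apply/implyP; rewrite ltnS leq_eqVlt => /orP [/eqP ryt|ryt].
    by have := none y; rewrite ryt eqxx.
  by have := fg y; rewrite ryt.
Qed.
End Greedy.

Section Count.
Variables (g k m Z' : nat).
Local Notation Z := Z'.+1.
Local Notation T := ('I_g * 'I_k)%type.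
Local Notation V := ('I_m.+1 * 'I_Z)%type.

Definition rk (x : T) : nat := x.1 * k + x.2.

Definition wit (f : {ffun T -> V}) (x : T) (v : V) (p : T) : bool :=
  [&& p.1 < x.1, p.2 < x.2, v.1 + (f p).1 == (f (p.1, x.2)).1 + (f (x.1, p.2)).1 &
      (v.2 + (f p).2) %% Z == ((f (p.1, x.2)).2 + (f (x.1, p.2)).2) %% Z].

Definition forbS (x : T) (f : {ffun T -> V}) : {set V} := [set v | [exists p, wit f x v p]].

Lemma rk_inj : injective rk.
Proof.
move=> [a b] [a' b']; rewrite /rk /= => e.
have kp : 0 < k by apply: leq_ltn_trans (ltn_ord b).
have ea : a = a' :> nat.
  have := congr1 (divn^~ k) e; rewrite /= !divnMDl // !divn_small ?ltn_ord //.
  by rewrite !addn0.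
have eb : b = b' :> nat.
  by move: e; rewrite ea => /addnI.
by congr (_, _); apply: val_inj.
Qed.

Lemma forbS_dep x (f f' : {ffun T -> V}) : (forall y, rk y < rk x -> f y = f' y) -> forbS x f = forbS x f'.
Proof.
move=> E; apply/setP => v; rewrite !inE; apply: eq_existsb => p.
rewrite /wit; case h1: (p.1 < x.1) => //=; case h2: (p.2 < x.2) => //=.
rewrite !(E p) ?(E (p.1, x.2)) ?(E (x.1, p.2)) // /rk /=; have := ltn_ord x.2; nia.
Qed.

Lemma wit_uniq f x v w p : wit f x v p -> wit f x w p -> v = w.
Proof.
case/and4P => _ _ /eqP e1 /eqP e2; case/and4P => _ _ /eqP e1' /eqP e2'.
have h1 : v.1 = w.1 :> nat by apply/eqP; rewrite -(eqn_add2r (f p).1) e1 e1'.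
have h2 : v.2 = w.2 :> nat.
  have : v.2 = w.2 %[mod Z] by apply/eqP; rewrite -(eqn_modDr (f p).2) e2 e2'.
  by rewrite !modn_small.
by clear e1 e2 e1' e2'; move: h1 h2; case: v => [v1 v2]; case: w => [w1 w2] /= h1 h2; congr (_, _); apply: val_inj.
Qed.

Lemma forbS_card x f : #|forbS x f| <= x.1 * x.2.
Proof.
pose phi (v : V) : T := odflt x [pick p | wit f x v p].
have phiP v : v \in forbS x f -> wit f x v (phi v).
  rewrite inE /phi => /existsP [p hp]; case: pickP => [q hq //|/(_ p)]; by rewrite hp.
have inj : {in forbS x f &, injective phi}.
  move=> v w hv hw e; apply: (wit_uniq (phiP v hv)); rewrite e; exact: phiP.
rewrite -(card_in_imset inj).
have hx1 : x.1 <= g by apply: ltnW.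
have hx2 : x.2 <= k by apply: ltnW.
pose emb (q : 'I_x.1 * 'I_x.2) : T := (widen_ord hx1 q.1, widen_ord hx2 q.2).
apply: (leq_trans (subset_leq_card (B := emb @: setT) _)).
  apply/subsetP => _ /imsetP [v hv ->].
  case/and4P: (phiP v hv) => h1 h2 _ _.
  apply/imsetP; exists (Ordinal h1, Ordinal h2) => //.
  by rewrite /emb; case: (phi v) h1 h2 => a b h1 h2; congr (_, _); apply: val_inj.
by apply: (leq_trans (leq_imset_card _ _)); rewrite cardsT card_prod !card_ord.
Qed.

Definition toPL (f : {ffun T -> V}) : pairT g k m Z := ([ffun x => (f x).1], [ffun x => (f x).2]).

Lemma count_good :
  \prod_(x : T) (m.+1 * Z - x.1 * x.2) <= #|[set PL : pairT g k m Z | no_active PL]|.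
Proof.
have := @greedy T V rk (ord0, ord0) forbS (fun x => x.1 * x.2)
  rk_inj forbS_dep forbS_card (g * k).
rewrite card_prod !card_ord.
rewrite (eq_bigl xpredT); last first.
  by move=> [a b]; rewrite /rk /=; have := ltn_ord a; have := ltn_ord b; nia.
move/leq_trans; apply.
have inj : injective toPL.
  move=> f f' e; apply/ffunP => x.
  have e1 := congr1 (fun PL : pairT g k m Z => PL.1 x) e; have e2 := congr1 (fun PL : pairT g k m Z => PL.2 x) e.
  move: e1 e2; rewrite /= !ffunE; case: (f x) (f' x) => [a b] [a' b'] /= -> -> //.
rewrite -(card_imset _ inj); apply: subset_leq_card; apply/subsetP => _ /imsetP [f hf ->].
rewrite inE; apply/forallP => i1; apply/forallP => i2; apply/forallP => j1; apply/forallP => j2.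
apply/negP => /and4P [hi hj e1 e2].
move: hf; rewrite inE => /andP [_ /forallP /(_ (i2, j2))].
rewrite {1}/rk /=; have -> : i2 * k + j2 < g * k.
  by have := ltn_ord i2; have := ltn_ord j2; nia.
move=> /= /negP; apply; rewrite inE; apply/existsP; exists (i1, j1).
move: e1 e2; rewrite /wit /= !ffunE /= hi hj /=.
move=> /eqP e1 /eqP e2; apply/andP; split; apply/eqP.
  by rewrite addnC.
by rewrite addnC.
Qed.
End Count.

Section Classes.
Variables (g k m Z : nat).

Definition actPL (p : {perm 'I_g} * {perm 'I_k}) (PL : pairT g k m Z) : pairT g k m Z :=
  ([ffun x => PL.1 ((p.1^-1)%g x.1, (p.2^-1)%g x.2)], [ffun x => PL.2 ((p.1^-1)%g x.1, (p.2^-1)%g x.2)]).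

Lemma class_card (PL : pairT g k m Z) : #|eq_class PL| <= g`! * k`!.
Proof.
apply: (@leq_trans #|[set actPL p PL | p : {perm 'I_g} * {perm 'I_k}]|).
  apply: subset_leq_card; apply/subsetP => PL'; rewrite inE => /existsP [pr /existsP [pc /forallP H]].
  apply/imsetP; exists (pr, pc) => //.
  case: PL' H => [P' L'] H; rewrite /actPL /=; congr (_, _); apply/ffunP => [[a b]]; rewrite ffunE /=;
  have /forallP /(_ ((pc^-1)%g b)) /andP [/eqP e1 /eqP e2] := H ((pr^-1)%g a);
  by rewrite /= !permKV in e1 e2; rewrite -?e1 -?e2.
by apply: (leq_trans (leq_imset_card _ _)); rewrite card_prod !card_Sn.
Qed.

Lemma class_refl (PL : pairT g k m Z) : PL \in eq_class PL.
Proof.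
rewrite inE; apply/existsP; exists 1%g; apply/existsP; exists 1%g.
by apply/forallP => i; apply/forallP => j; rewrite !perm1 !eqxx.
Qed.

Lemma good_le_classes :
  #|[set PL : pairT g k m Z | no_active PL]| <= N_N g k m Z * (g`! * k`!).
Proof.
set G := [set PL : pairT g k m Z | no_active PL].
rewrite /N_N -/G -sum1_card.
rewrite (partition_big (fun PL => eq_class PL) (fun C => C \in [set eq_class PL | PL in G])) /=; last first.
  by move=> PL hPL; apply/imsetP; exists PL.
rewrite -sum_nat_const; apply: leq_sum => C /imsetP [PL0 _ ->].
apply: (leq_trans _ (class_card PL0)).
rewrite sum1dep_card; apply: subset_leq_card.
apply/subsetP => PL; rewrite inE => /andP [_ /eqP <-]; exact: class_refl.
Qed.
End Classes.

Lemma bern a n : a ^ n + n * a ^ n.-1 <= (a + 1) ^ n.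
Proof.
elim: n => [|n IH] //=.
rewrite expnS [X in _ <= X]expnS.
apply: (leq_trans _ (leq_mul (leqnn (a+1)) IH)).
case: n IH => [|n] IH /=; first by rewrite ?muln1 ?expn0 ?mul1n ?addn0 ?muln0; lia.
rewrite expnS; nia.
Qed.

Lemma bern2 a : 1 <= a -> (2 * a + 1) * a ^ a <= (a + 1) ^ (a + 1).
Proof.
move=> ha; rewrite expnD expn1 mulnC.
have := bern a a.
case: a ha => [//|a] _ /=; rewrite [in X in X -> _](expnS a.+1 a) (expnS a.+1 a).
move: (a.+1 ^ a) ((a.+1 + 1) ^ a.+1) => P Q; nia.
Qed.

Lemma key1 g k N c : 2 <= g -> 2 <= k -> g + k < g * k ->
  2 * (2 * ((2 * g - 3) * (2 * k - 3)) - 1) <= 3 * N ->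
  c <= (g - 1) * (k - 1) ->
  ((2 * g - 3) * (2 * k - 3)) ^ 2 * c + 2 * N * (c * c.-1) <= 2 * N * c * ((2 * g - 3) * (2 * k - 3)).
Proof.
move=> hg hk hgk hN hc.
have [a ea] : exists a, g = a + 2 by exists (g - 2); lia.
have [b eb] : exists b, k = b + 2 by exists (k - 2); lia.
subst g k.
have e1 : 2 * (a + 2) - 3 = 2 * a + 1 by lia.
have e2 : 2 * (b + 2) - 3 = 2 * b + 1 by lia.
have e3 : (a + 2 - 1) * (b + 2 - 1) = a * b + a + b + 1 by nia.
rewrite e1 e2 in hN *; rewrite e3 in hc.
set D := (2 * a + 1) * (2 * b + 1) in hN *.
have eD : D = 4 * (a * b) + 2 * a + 2 * b + 1 by rewrite /D; nia.
set S := 3 * (a * b) + a + b + 1.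
have hD : 3 * D ^ 2 <= 4 * (2 * D - 1) * S.
  have -> : 2 * D - 1 = 8 * (a * b) + 4 * a + 4 * b + 1 by lia.
  rewrite eD /S; move: (a * b) => p; nia.
case: c hc => [|c] hc; first by rewrite !muln0 mul0n.
rewrite /=.
have hs : S <= D - c by lia.
have h1 : 4 * (2 * D - 1) * S <= 6 * N * S by apply: leq_mul => //; lia.
have h2 : 6 * N * S <= 6 * N * (D - c) by apply: leq_mul.
have h3 : D ^ 2 <= 2 * N * (D - c).
  have h5 := leq_trans hD (leq_trans h1 h2).
  have e6 : 6 * N * (D - c) = 3 * (2 * N * (D - c)) by ring.
  by move: h5; rewrite e6 leq_mul2l.
have h4 : D ^ 2 + 2 * N * c <= 2 * N * D.
  have hcD : c <= D by lia.
  by move: h3; rewrite mulnBr leq_subRL // => [h3|]; [rewrite addnC | apply: leq_mul].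
have -> : D ^ 2 * c.+1 + 2 * N * (c.+1 * c) = c.+1 * (D ^ 2 + 2 * N * c) by ring.
have -> : 2 * N * c.+1 * D = c.+1 * (2 * N * D) by ring.
by rewrite leq_mul2l h4 orbT.
Qed.

Local Open Scope ring_scope.

Lemma natrB_ge (N c : nat) : N%:R - c%:R <= (N - c)%:R :> rat.
Proof.
case: (leqP c N) => h; first by rewrite natrB.
have -> : (N - c)%N = 0%N by apply/eqP; rewrite subn_eq0 ltnW.
rewrite subr_le0 ler_nat; exact: ltnW.
Qed.

Lemma bonf (x : rat) c : 0 <= x -> x <= 1 ->
  (1 - x) ^+ c * 2 <= 2 - 2 * c%:R * x + (c * c.-1)%:R * x ^+ 2.
Proof.
move=> h0 h1; elim: c => [|c IH]; first by rewrite expr0 mul0n mulr0 mul0r subr0 mul0r addr0 mul1r.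
have ec : (c.+1 * c.+1.-1)%N = (c * c.-1 + 2 * c)%N by case: c {IH} => //= c; nia.
rewrite exprS -mulrA ec natrD natrM -addn1 natrD.
have hx : 0 <= 1 - x by lra.
have := ler_wpM2l hx IH.
set P := (c * c.-1)%:R; set C := c%:R.
have hP : 0 <= P by rewrite /P ler0n.
move=> H; apply: (le_trans H).
have : 0 <= P * x ^+ 3 by rewrite mulr_ge0 // exprn_ge0.
rewrite !exprS expr0; nra.
Qed.

Lemma cell1 (N D c : nat) : (2 <= D)%N ->
  (D ^ 2 * c + 2 * N * (c * c.-1) <= 2 * N * c * D)%N ->
  N%:R * (1 - 2%:R / D%:R) ^+ c <= (N - c)%:R :> rat.
Proof.
move=> hD hk.
have dp : 0 < D%:R :> rat by rewrite ltr0n; apply: leq_trans hD.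
set x := 2%:R / D%:R : rat.
have x0 : 0 <= x by rewrite /x divr_ge0 // ler0n.
have x1 : x <= 1 by rewrite /x ler_pdivrMr // mul1r ler_nat.
apply: le_trans (natrB_ge N c).
have := bonf c x0 x1.
have hN : 0 <= N%:R :> rat by rewrite ler0n.
move=> H.
have H2 := ler_wpM2l hN H.
have hk' : (D%:R ^+ 2 * c%:R + 2 * N%:R * (c * c.-1)%:R <= 2 * N%:R * c%:R * D%:R :> rat).
  by move: hk; rewrite -(ler_nat rat) !natrD !natrM ?natrX ?expr2.
set P := (c * c.-1)%:R : rat in H2 hk' *.
set C := c%:R : rat in H2 hk' *.
set d := D%:R : rat in dp hk' *.
set n := N%:R : rat in hN H2 hk' *.
have ex : x * d = 2 by rewrite /x mulfVK // gt_eqF.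
have : n * ((1 - x) ^+ c * 2) <= 2 * (n - C).
  apply: (le_trans H2).
  have hd2 : 0 < d ^+ 2 by apply: exprn_gt0.
  rewrite -(ler_pM2r hd2).
  have -> : n * (2 - 2 * C * x + P * x ^+ 2) * d ^+ 2 = 2 * n * d ^+ 2 - 2 * 2 * n * C * d + 4 * n * P.
    have -> : x = 2 / d by [].
    by field; rewrite gt_eqF.
  nra.
rewrite mulrA; nra.
Qed.

Lemma cell2 (N n c : nat) : (1 <= n)%N -> (4 * n <= N)%N -> (c <= n + 1)%N ->
  N%:R * (1 - (n + 1)%N%:R / (4 * n)%N%:R) <= (N - c)%:R :> rat.
Proof.
move=> h1 h2 h3.
apply: le_trans (natrB_ge N c).
have hp : 0 < (4 * n)%N%:R :> rat by rewrite ltr0n; lia.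
have hk : (c * (4 * n) <= N * (n + 1))%N by nia.
move: hk; rewrite -(ler_nat rat) !natrM => hk.
rewrite mulrBr mulr1 lerD2l lerN2 mulrA ler_pdivlMr //.
have : (0 < n%:R :> rat) by rewrite ltr0n. lra.
Qed.

Lemma sum_cells g k : (\sum_(x : 'I_g * 'I_k) (x.1 * x.2) = 'C(g, 2) * 'C(k, 2))%N.
Proof.
rewrite -(pair_bigA _ (fun (i : 'I_g) (j : 'I_k) => (i * j)%N)) /=.
rewrite (eq_bigr (fun i : 'I_g => (i * \sum_(j < k) (j : nat))%N)); last by move=> i _; rewrite big_distrr.
rewrite -big_distrl /=.
by rewrite -(big_mkord xpredT (fun i => i)) -(big_mkord xpredT (fun i => i)) !bin2_sum.
Qed.

Local Open Scope ring_scope.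
Theorem corollary2 (m Z g k : nat) :
  (1 <= Z)%N -> (2 <= g)%N -> (2 <= k)%N -> (g + k < g * k)%N ->
  (2 * m ^ 2 + 4 * m + 3)%N%:R / (3 * m.+1 ^ 3 * Z)%N%:R
    <= Num.max (boundI g k) (boundII g k) ->
  (if boundII g k < boundI g k then
     (Z * m.+1)%N%:R ^+ (g * k) * (1 - 2%:R / (Delta g k)%:R) ^+ ('C(g, 2) * 'C(k, 2))
       / (g`! * k`!)%N%:R
   else
     (Z * m.+1)%N%:R ^+ (g * k)
       * (1 - (g * k - g - k + 1)%N%:R / (4 * (g * k - g - k))%N%:R) ^+ (g * k)
       / (g`! * k`!)%N%:R)
  <= (N_N g k m Z)%:R :> rat.
Proof.
move=> hZ hg hk hgk hyp.
have [Z' eZ] : exists Z', Z = Z'.+1 by exists Z.-1; rewrite prednK.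
subst Z.
set N := (Z'.+1 * m.+1)%N.
set F := (g`! * k`!)%N.
have Fp : 0 < F%:R :> rat by rewrite ltr0n /F muln_gt0 !fact_gt0.
have cg := count_good g k m Z'.
have cl := good_le_classes g k m Z'.+1.
have main : forall (w : 'I_g * 'I_k -> rat), (forall x, 0 <= N%:R * w x) ->
    (forall x, N%:R * w x <= (N - x.1 * x.2)%:R) ->
    N%:R ^+ (g * k) * \prod_x w x / F%:R <= (N_N g k m Z'.+1)%:R.
  move=> w w0 w1.
  rewrite ler_pdivrMr // -natrM.
  apply: le_trans (_ : (#|[set PL : pairT g k m Z'.+1 | no_active PL]|)%:R <= _); last by rewrite ler_nat.
  apply: le_trans (_ : (\prod_(x : 'I_g * 'I_k) (m.+1 * Z'.+1 - x.1 * x.2))%N%:R <= _); last by rewrite ler_nat.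
  rewrite natr_prod.
  have -> : N%:R ^+ (g * k) * \prod_x w x = \prod_x (N%:R * w x).
    by rewrite big_split /= prodr_const card_prod !card_ord.
  apply: ler_prod => x _; rewrite w0 /=; have := w1 x; by rewrite /N mulnC.
have hc : forall x : 'I_g * 'I_k, (x.1 * x.2 <= (g - 1) * (k - 1))%N.
  move=> [a b] /=; apply: leq_mul; rewrite leq_subRL ?addn1 ?ltn_ord //; lia.
set A := (2 * m ^ 2 + 4 * m + 3)%N in hyp.
set B := (3 * m.+1 ^ 3 * Z'.+1)%N in hyp.
have Bp : 0 < B%:R :> rat by rewrite ltr0n /B; lia.
have hA : (2 * (m.+1 ^ 2) <= A)%N by rewrite /A; nia.
case hb: (boundII g k < boundI g k); cbv iota.
- rewrite Order.POrderTheory.max_l in hyp; last exact: ltW.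
  set D := Delta g k in hyp *.
  have hD : (3 <= D)%N.
    rewrite /D /Delta.
    have [a ea] : exists a, g = (a + 2)%N by exists (g - 2)%N; lia.
    have [b eb] : exists b, k = (b + 2)%N by exists (k - 2)%N; lia.
    rewrite ea eb.
    have -> : (2 * (a + 2) - 3 = 2 * a + 1)%N by lia.
    have -> : (2 * (b + 2) - 3 = 2 * b + 1)%N by lia.
    nia.
  move: hyp; rewrite /boundI -/D.
  have -> : D%:R - 1 = (D - 1)%N%:R :> rat by rewrite (natrB _ (ltnW (ltnW hD))).
  rewrite -!natrX.
  have dpos : 0 < (D ^ D)%N%:R :> rat by rewrite ltr0n expn_gt0; apply/orP; left; lia.
  rewrite (ler_pdivrMr _ _ Bp) mulrAC (ler_pdivlMr _ _ dpos).
  rewrite -!natrM ler_nat => hyp.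
  have hb2 : ((2 * D - 1) * (D - 1) ^ (D - 1) <= D ^ D)%N.
    have := @bern2 (D - 1)%N; rewrite subnK; last by lia.
    have -> : (2 * (D - 1) + 1 = 2 * D - 1)%N by lia.
    by apply; lia.
  have hAB : (A * (2 * D - 1) <= B)%N.
    have hp : (0 < (D - 1) ^ (D - 1))%N by rewrite expn_gt0; apply/orP; left; lia.
    rewrite -(leq_pmul2r hp).
    apply: leq_trans (_ : A * D ^ D <= _)%N.
      by rewrite -mulnA leq_mul2l hb2 orbT.
    rewrite (_ : D.-1 = (D - 1)%N) in hyp; last by lia.
    exact: (leq_trans hyp (eq_leq (mulnC _ _))).
  have hN3 : (2 * (2 * D - 1) <= 3 * N)%N.
    have hp : (0 < m.+1 ^ 2)%N by rewrite expn_gt0.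
    rewrite -(leq_pmul2r hp).
    apply: leq_trans (_ : A * (2 * D - 1) <= _)%N.
      by rewrite mulnAC leq_mul2r hA orbT.
    apply: (leq_trans hAB); rewrite /B /N (_ : m.+1 ^ 3 = m.+1 * m.+1 ^ 2)%N; last by rewrite -expnS.
    nia.
  have x1 : 2%:R / D%:R <= 1 :> rat.
    have Dp : 0 < D%:R :> rat by rewrite ltr0n; lia.
    rewrite (ler_pdivrMr _ _ Dp) mul1r ler_nat; lia.
  rewrite -sum_cells -prodrXr natrX.
  apply: main => x.
    apply: mulr_ge0; first exact: ler0n.
    apply: exprn_ge0; rewrite subr_ge0; exact: x1.
  apply: cell1; first by lia.
  by apply: key1 => //; exact: hc.
- rewrite Order.POrderTheory.max_r in hyp; last by rewrite leNgt hb.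
  set n := (g * k - g - k)%N in hyp *.
  have n1 : (1 <= n)%N by rewrite /n; lia.
  move: hyp; rewrite /boundII -/n.
  have np : 0 < 256%:R * n%:R :> rat by rewrite -natrM ltr0n; lia.
  rewrite (ler_pdivrMr _ _ Bp) mulrAC (ler_pdivlMr _ _ np).
  rewrite -!natrM ler_nat => hyp.
  have h4 : (4 * n <= N)%N.
    have hp : (0 < m.+1 ^ 2)%N by rewrite expn_gt0.
    have : (512 * n * m.+1 ^ 2 <= 81 * N * m.+1 ^ 2)%N.
      have e : (27 * B = 81 * N * m.+1 ^ 2)%N by rewrite /B /N (_ : m.+1 ^ 3 = m.+1 * m.+1 ^ 2)%N; [nia | rewrite -expnS].
      rewrite -e; apply: leq_trans hyp; move: (m.+1 ^ 2)%N hA => P hA; nia.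
    rewrite (leq_pmul2r hp) => h; lia.
  have y1 : (g * k - g - k + 1)%N%:R / (4 * (g * k - g - k))%N%:R <= 1 :> rat.
    have np4 : 0 < (4 * n)%N%:R :> rat by rewrite ltr0n; lia.
    rewrite -/n (ler_pdivrMr _ _ np4) mul1r ler_nat; lia.
  have eP : (1 - (n + 1)%N%:R / (4 * n)%N%:R) ^+ (g * k) = \prod_(x : 'I_g * 'I_k) (1 - (n + 1)%N%:R / (4 * n)%N%:R) :> rat.
    by rewrite prodr_const card_prod !card_ord.
  rewrite eP.
  apply: main => x.
    apply: mulr_ge0; first exact: ler0n.
    rewrite subr_ge0; exact: y1.
  apply: cell2; [exact: n1 | exact: h4 |].
  by have := hc x; rewrite /n; nia.
Qed.
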